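(* If a Boolean function $f:\{0,1\}^n\to\{0,1\}$ has a nearest neighbor representation with $m$ prototypes, then it has a sign-representation over $\{1,2\}$ having $m$ terms (monomials).
   Context: A nearest neighbor representation of $f$ is a pair of disjoint sets $(P,N)$ of points of $\mathbb R^n$ (prototypes; their number is $|P\cup N|$) such that for every $a\in\{0,1\}^n$: if $f(a)=1$, there is $b\in P$ with $d(a,b)<d(a,c)$ for all $c\in N$; if $f(a)=0$, there is $b\in N$ with $d(a,b)<d(a,c)$ for all $c\in P$ ($d$ = Euclidean distance). Write $\tilde x_i=2^{x_i}$, a bijection $\{0,1\}\to\{1,2\}$. A multivariate polynomial $p(\tilde x_1,\dots,\tilde x_n)$ (with real coefficients and nonnegative integer exponents) is a sign-representation of $f$ over $\{1,2\}$ if for every $x\in\{0,1\}^n$, $p(2^{x_1},\dots,2^{x_n})\ge 0$ iff $f(x)=1$. The number of terms is the number of monomials of $p$. *)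

(* Defs.v *)
From HB Require Import structures.
From mathcomp Require Import all_boot all_order all_algebra.
From mathcomp Require Import finmap.
From mathcomp Require Import mpoly.
From mathcomp Require Import reals.
Set Implicit Arguments. Unset Strict Implicit. Unset Printing Implicit Defensive.
Import Order.TTheory GRing.Theory Num.Theory.
Local Open Scope ring_scope.
Local Open Scope fset_scope.

Section Defs.
Variables (R : realType) (n : nat).

Definition bpt (a : 'I_n -> bool) : 'rV[R]_n := \row_i (a i)%:R.

Definition edist (u v : 'rV[R]_n) : R := Num.sqrt (\sum_i (u 0 i - v 0 i) ^+ 2).

Definition nn_rep (f : ('I_n -> bool) -> bool) (P N : {fset 'rV[R]_n}) : Prop :=
  P `&` N = fset0 /\
  forall a : 'I_n -> bool,
    (f a -> exists2 b, b \in P & forall c, c \in N -> edist (bpt a) b < edist (bpt a) c) /\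
    (~~ f a -> exists2 b, b \in N & forall c, c \in P -> edist (bpt a) b < edist (bpt a) c).

Definition nprototypes (P N : {fset 'rV[R]_n}) : nat := #|` P `|` N|.

Definition tilde (a : 'I_n -> bool) : 'I_n -> R := fun i => if a i then 2 else 1.

Definition sign_rep (f : ('I_n -> bool) -> bool) (p : {mpoly R[n]}) : Prop :=
  forall a : 'I_n -> bool, (0 <= p.@[tilde a]) <-> f a.

Definition nterms (p : {mpoly R[n]}) : nat := size (msupp p).

End Defs.

(* Main.v *)
Require Import Defs.
From HB Require Import structures.
From mathcomp Require Import all_boot all_order all_algebra.
From mathcomp Require Import finmap.
From mathcomp Require Import mpoly.
From mathcomp Require Import reals.
From mathcomp Require Import zify lra.
Set Implicit Arguments. Unset Strict Implicit. Unset Printing Implicit Defensive.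
Import Order.TTheory GRing.Theory Num.Theory.
Local Open Scope ring_scope.

Lemma finpos (R : realType) (T : finType) (g : T -> R) :
  exists2 d : R, 0 < d & forall t, 0 < g t -> d <= g t.
Proof.
suff H : forall s : seq T, exists2 d : R, 0 < d & forall t, t \in s -> 0 < g t -> d <= g t.
  by have [d d0 Hd] := H (enum T); exists d => // t; apply: Hd; rewrite mem_enum.
elim=> [|x s [d d0 Hd]]; first by exists 1.
case: (ltP 0 (g x)) => gx.
  exists (if d <= g x then d else g x); first by case: (leP d (g x)).
  move=> t; rewrite inE => /orP[/eqP->|ts] gt.
    by case: (leP d (g x)) => // h; apply: ltW.
  case: (leP d (g x)) => h; first exact: Hd.
  by apply: le_trans (Hd t ts gt); apply: ltW.
exists d => // t; rewrite inE => /orP[/eqP->|ts] gt; last exact: Hd.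
by move: gx; rewrite leNgt gt.
Qed.

Lemma finbnd (T : finType) (h : T -> nat) : exists B, forall t, (h t <= B)%N.
Proof.
exists (\sum_t h t)%N => t; rewrite (bigD1 t) //=; exact: leq_addr.
Qed.

Lemma keysum (R : realType) (m : nat) (pos : 'I_m -> bool) (x : 'I_m -> R) (y : R) j0 :
  pos j0 -> (forall j, 0 <= x j) -> (forall j, ~~ pos j -> x j <= y) -> 0 <= y ->
  m%:R * y < x j0 -> 0 < \sum_j (if pos j then x j else - x j).
Proof.
move=> pj0 x0 xy y0 my.
rewrite (bigID pos) /=.
have -> : \sum_(j | pos j) (if pos j then x j else - x j) = \sum_(j | pos j) x j.
  by apply: eq_bigr => j ->.
have -> : \sum_(j | ~~ pos j) (if pos j then x j else - x j) = - \sum_(j | ~~ pos j) x j.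
  by rewrite -sumrN; apply: eq_bigr => j /negbTE ->.
have h1 : x j0 <= \sum_(j | pos j) x j.
  by rewrite (bigD1 j0) //= lerDl; apply: sumr_ge0.
have h2 : \sum_(j | ~~ pos j) x j <= m%:R * y.
  apply: (@le_trans _ _ (\sum_(j : 'I_m) y)); last by rewrite sumr_const card_ord mulr_natl.
  rewrite [X in _ <= X](bigID (fun j => ~~ pos j)) /=.
  apply: (@le_trans _ _ (\sum_(i < m | ~~ pos i) y)).
    by apply: ler_sum => j /xy.
  by rewrite lerDl; apply: sumr_ge0.
lra.
Qed.

Section Main.
Variables (R : realType) (n m : nat) (b : 'I_m -> 'rV[R]_n) (pos : 'I_m -> bool).
Hypothesis binj : injective b.

Definition Dst (a : 'I_n -> bool) (j : 'I_m) : R := \sum_i ((a i)%:R - b j 0 i) ^+ 2.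

Lemma main_poly : exists p : {mpoly R[n]}, nterms p = m /\
  forall a j0, (forall j, pos j != pos j0 -> Dst a j0 < Dst a j) ->
    if pos j0 then 0 < p.@[tilde R a] else p.@[tilde R a] < 0.
Proof.
have [d d0 Hd0] := finpos (fun t : {ffun 'I_n -> bool} * 'I_m * 'I_m =>
   Dst t.1.1 t.2 - Dst t.1.1 t.1.2).
have Hd : forall a j k, Dst a j < Dst a k -> d <= Dst a k - Dst a j.
  move=> a j k h.
  have eD : forall l, Dst (finfun a) l = Dst a l.
    by move=> l; apply: eq_bigr => i _; rewrite ffunE.
  by have := Hd0 (finfun a, j, k); rewrite /= !eD subr_gt0; apply.
pose M := (Num.truncn ((2 * n + 1)%:R / d)).+1.
have HM : (2 * n + 1)%:R < M%:R * d by rewrite -ltr_pdivrMr // truncnS_gt.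
pose c (j : 'I_m) (i : 'I_n) (t : bool) : R := M%:R * (t%:R - b j 0 i) ^+ 2.
have c0 : forall j i t, 0 <= c j i t by move=> *; rewrite mulr_ge0 ?ler0n ?sqr_ge0.
pose e j i t := Num.truncn (c j i t).
have [B HB] := finbnd (fun x : 'I_m * 'I_n * bool => e x.1.1 x.1.2 x.2).
have eB : forall j i t, (e j i t <= B)%N by move=> j i t; exact: (HB (j, i, t)).
pose k (j : 'I_m) (i : 'I_n) := (m * e j i false + m * B + j - m * e j i true)%N.
pose g (j : 'I_m) := (\sum_(i < n) m * (B - e j i false))%N.
pose mk j : 'X_{1..n} := [multinom k j i | i < n].
pose sg j : R := if pos j then 1 else -1.
pose p : {mpoly R[n]} := \sum_(j < m) (sg j * 2 ^+ g j) *: 'X_[mk j].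
pose Nn a j := (g j + \sum_(i < n) a i * k j i)%N.
have Heval : forall a, p.@[tilde R a] = \sum_j sg j * 2 ^+ Nn a j.
  move=> a; rewrite raddf_sum; apply: eq_bigr => j _ /=.
  rewrite mevalZ mevalX exprD -mulrA; congr (_ * (_ * _)); rewrite -[RHS]prodrXr.
  apply: eq_bigr => i _; rewrite mnmE /tilde; case: (a i) => /=.
    by rewrite mul1n.
  by rewrite mul0n expr0 expr1n.
have Hid : forall (a : 'I_n -> bool) j, (Nn a j + m * \sum_i e j i (a i) =
    \sum_(i < n) (m * B + a i * (m * B)) + (\sum_(i < n) (a i : nat)) * j)%N.
  move=> a j; rewrite /Nn /g -addnA big_distrr big_distrl /= -!big_split /=.
  apply: eq_bigr => i _; rewrite /k.
  have h1 : (m * e j i true <= m * B)%N by rewrite leq_mul2l eB orbT.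
  have h2 : (m * e j i false <= m * B)%N by rewrite leq_mul2l eB orbT.
  have h3 : (m * (B - e j i false) = m * B - m * e j i false)%N by rewrite mulnBr.
  rewrite h3; case: (a i) => /=; rewrite ?mul1n ?mul0n; lia.
have Hbnd : forall a j, ((\sum_i e j i (a i))%:R <= M%:R * Dst a j) /\
    (M%:R * Dst a j <= (\sum_i e j i (a i) + n)%:R).
  move=> a j; have -> : M%:R * Dst a j = \sum_i c j i (a i) by rewrite /Dst mulr_sumr.
  split.
    rewrite natr_sum; apply: ler_sum => i _.
    by have /andP[] := truncn_itv (c0 j i (a i)).
  apply: (@le_trans _ _ (\sum_i ((e j i (a i)).+1)%:R)).
    apply: ler_sum => i _; apply: ltW; exact: truncnS_gt.
  rewrite -natr_sum ler_nat.
  under eq_bigr do rewrite -addn1.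
  by rewrite big_split /= sum1_card card_ord.
have Hcmp : forall a j0 j, Dst a j0 < Dst a j -> (Nn a j + m <= Nn a j0)%N.
  move=> a j0 j h; have hd := Hd _ _ _ h.
  have [l0 u0] := Hbnd a j0; have [l1 u1] := Hbnd a j.
  move: l0 u0 l1 u1; set E0 := (\sum_i e j0 i (a i))%N; set E1 := (\sum_i e j i (a i))%N.
  move=> l0 u0 l1 u1.
  have hM : M%:R * d <= M%:R * Dst a j - M%:R * Dst a j0 by rewrite -mulrBr ler_wpM2l ?ler0n.
  have hE : (E0 + (2 * n + 1) < E1 + n)%N.
    rewrite -(ltr_nat R) !natrD; rewrite natrD in u1; lra.
  have Hi0 := Hid a j0; have Hi1 := Hid a j.
  have hA : (\sum_i (a i : nat) <= n)%N.
    apply: (@leq_trans (\sum_(i < n) 1)%N); first by apply: leq_sum => i _; apply: leq_b1.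
    by rewrite sum1_card card_ord.
  have hj := ltn_ord j.
  have hAj : ((\sum_i (a i : nat)) * j <= m * n)%N by rewrite mulnC; apply: leq_mul => //; apply: ltnW.
  have hmE : (m * (E0 + n + 1) <= m * E1)%N by rewrite leq_mul2l; apply/orP; right; lia.
  move: Hi0 Hi1 hAj hmE; rewrite !mulnDr.
  move: ((\sum_i (a i : nat)) * j)%N ((\sum_i (a i : nat)) * j0)%N (m * E0)%N (m * E1)%N (m * n)%N.
  move=> X Y Z W V; lia.
have kmod : forall j i, (k j i %% m = j)%N.
  move=> j i; rewrite /k.
  have h1 : (m * e j i true <= m * (e j i false + B))%N.
    by rewrite leq_mul2l; apply/orP; right; apply: leq_trans (eB j i true) (leq_addl _ _).
  rewrite -mulnDr -addnBAC // -mulnBr mulnC modnMDl modn_small //.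
have mkinj : injective mk.
  move=> j j' h; case: (posnP n) => n0.
    apply: binj; apply/matrixP => r [i hi]; exfalso; move: hi; by rewrite n0.
  have := congr1 (fun mo : 'X_{1..n} => (mo (Ordinal n0) %% m)%N) h.
  by rewrite /= !mnmE !kmod => /val_inj.
have coef : forall mo, p@_mo = \sum_j (sg j * 2 ^+ g j) * (mk j == mo)%:R.
  by move=> mo; rewrite raddf_sum; apply: eq_bigr => j _ /=; rewrite mcoeffZ mcoeffX.
have Hsupp : msupp p =i map mk (enum 'I_m).
  move=> mo; rewrite mcoeff_msupp coef.
  case: (boolP (mo \in map mk (enum 'I_m))) => hmo.
    move/mapP: hmo => [j _ ->].
    rewrite (bigD1 j) //= eqxx mulr1 big1 ?addr0 => [|l hl].
      rewrite mulf_neq0 // ?expf_neq0 ?pnatr_eq0 //.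
      by rewrite /sg; case: (pos j); rewrite ?oppr_eq0 oner_eq0.
    by rewrite (inj_eq mkinj) (negbTE hl) mulr0.
  rewrite big1 ?eqxx // => j _; case: eqP => [ej|]; last by rewrite mulr0.
  by move: hmo; rewrite -ej map_f // mem_enum.
exists p; split.
  have hu : uniq (map mk (enum 'I_m)) by rewrite map_inj_uniq ?enum_uniq.
  rewrite /nterms (perm_size (uniq_perm (msupp_uniq p) hu Hsupp)).
  by rewrite size_map size_enum_ord.
move=> a j0 H; rewrite Heval.
pose x j : R := 2 ^+ Nn a j.
have x0 : forall j, 0 <= x j by move=> j; rewrite exprn_ge0.
have E1 : \sum_j sg j * 2 ^+ Nn a j = \sum_j (if pos j then x j else - x j).
  by apply: eq_bigr => j _; rewrite /sg; case: (pos j); rewrite ?mul1r ?mulN1r.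
have p2 : (0 : R) < 2 ^+ m by rewrite exprn_gt0.
have Hy : forall j, pos j != pos j0 -> x j <= x j0 / 2 ^+ m.
  move=> j hj; rewrite ler_pdivlMr // /x -exprD ler_eXn2l ?ltr1n //.
  by apply: Hcmp; apply: H.
have Hmy : m%:R * (x j0 / 2 ^+ m) < x j0.
  rewrite mulrA ltr_pdivrMr // mulrC ltr_pM2l ?exprn_gt0 //.
  by rewrite -natrX ltr_nat ltn_expl.
have y0 : 0 <= x j0 / 2 ^+ m by rewrite divr_ge0 // ltW.
rewrite E1; case: ifP => pj0.
  apply: (@keysum R m pos x (x j0 / 2 ^+ m) j0) => // j hj.
  by apply: Hy; rewrite pj0 (negbTE hj).
have -> : \sum_j (if pos j then x j else - x j) =
    - \sum_j (if ~~ pos j then x j else - x j).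
  by rewrite -sumrN; apply: eq_bigr => j _; case: (pos j); rewrite /= ?opprK.
rewrite oppr_lt0; apply: (@keysum R m (fun j => ~~ pos j) x (x j0 / 2 ^+ m) j0) => //.
  by rewrite pj0.
by move=> j; rewrite negbK => hj; apply: Hy; rewrite pj0 hj.
Qed.
End Main.

Lemma edist_lt (R : realType) n (a : 'I_n -> bool) (u v : 'rV[R]_n) :
  edist (@bpt R n a) u < edist (@bpt R n a) v ->
  \sum_i ((a i)%:R - u 0 i) ^+ 2 < \sum_i ((a i)%:R - v 0 i) ^+ 2.
Proof.
rewrite /edist /bpt; under eq_bigr do rewrite mxE; under [X in _ < Num.sqrt X]eq_bigr do rewrite mxE.
move=> h; rewrite ltNge; apply/negP => hle; move: h; rewrite ltNge ler_sqrt ?hle //.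
by apply: sumr_ge0 => i _; apply: sqr_ge0.
Qed.



Theorem lemma7 (R : realType) (n m : nat) (f : ('I_n -> bool) -> bool) :
  (exists P N : {fset 'rV[R]_n}, nn_rep f P N /\ nprototypes P N = m) ->
  exists p : {mpoly R[n]}, sign_rep f p /\ nterms p = m.
Proof.
move=> [P [N [[disj Hf] <-]]].
set U := (P `|` N)%fset.
pose s := enum_fset U.
pose b (j : 'I_(size s)) := nth 0 s j.
have binj : injective b.
  move=> j j' h; apply: val_inj; apply/eqP.
  by rewrite -(nth_uniq 0 (ltn_ord j) (ltn_ord j') (fset_uniq U)); apply/eqP.
have bU : forall x, x \in U -> exists j, b j = x.
  move=> x hx; have hi : (index x s < size s)%N by rewrite index_mem.
  by exists (Ordinal hi); rewrite /b nth_index.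
have bUin : forall j, b j \in U by move=> j; exact: (mem_nth 0 (ltn_ord j)).
pose pos j := b j \in P.
have [p [hp Hp]] := @main_poly R n (size s) b pos binj.
exists p; split => //.
move=> a; split.
  move=> hp0; apply/negPn/negP => hf.
  have [c cN hc] := (Hf a).2 hf.
  have cU : c \in U by rewrite in_fsetU cN orbT.
  have [j0 hj0] := bU c cU.
  have pj0 : pos j0 = false.
    rewrite /pos hj0; apply/negP => cP.
    have : c \in (P `&` N)%fset by rewrite in_fsetI cP cN.
    by rewrite disj in_fset0.
  have := Hp a j0; rewrite pj0 => H.
  have hlt : p.@[tilde R a] < 0.
    apply: H => j; rewrite /Dst hj0 => hj; apply: edist_lt; apply: hc.
    by move: hj; rewrite /pos; case: (b j \in P).
  by move: hp0; rewrite leNgt hlt.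
move=> hf; have [c cP hc] := (Hf a).1 hf.
have cU : c \in U by rewrite in_fsetU cP.
have [j0 hj0] := bU c cU.
have pj0 : pos j0 = true by rewrite /pos hj0.
have := Hp a j0; rewrite pj0 => H.
apply: ltW; apply: H => j; rewrite /Dst hj0 => hj; apply: edist_lt; apply: hc.
have := bUin j; rewrite in_fsetU; move: hj; rewrite /pos; case: (b j \in P) => //= _.
Qed.
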